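(* Let $(G,\cdot,N,\star,\odot)$ be a left bracoid (a left skew bracoid with $(N,\star)$ abelian) and $(H,\circ)$ a group. Assume (a) $\boxdot$ is a transitive right action of $(H,\circ)$ on $N$ such that $g\odot(\eta\boxdot h)=(g\odot\eta)\boxdot h$ for all $g\in G$, $h\in H$, $\eta\in N$; and (b) ${}^{\alpha(g)}(\eta^{\beta(h)})=({}^{\alpha(g)}\eta)^{\beta(h)}$ for all $g\in G$, $h\in H$, $\eta\in N$. Then for all $\eta\in N$ and $h\in H$: (1) $\overline{\eta}^{\beta(h)}=\overline{\eta^{\beta(h)}}$; (2) $\overline{\eta}\boxdot h=(e_N\boxdot h)\star(e_N\boxdot h)\star\overline{(\eta\boxdot h)}$.
   Context: For a group $(N,\star)$, $e_N$ denotes its identity and $\overline{\eta}$ the inverse of $\eta$. A left skew bracoid is $(G,\cdot,N,\star,\odot)$ with $(G,\cdot),(N,\star)$ groups and $\odot$ a transitive left action of $G$ on $N$ with $g\odot(\mu\star\eta)=(g\odot\mu)\star\overline{(g\odot e_N)}\star(g\odot\eta)$ for all $g\in G$, $\mu,\eta\in N$. For $g\in G$, ${}^{\alpha(g)}\eta=\overline{(g\odot e_N)}\star(g\odot\eta)\star\overline{\eta}$. For $h\in H$, $\eta^{\beta(h)}=\overline{\eta}\star(\eta\boxdot h)\star\overline{(e_N\boxdot h)}$. *)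

(* Defs.v *)
Set Implicit Arguments.

Record group := Group {
  carrier :> Type;
  gmul : carrier -> carrier -> carrier;
  gone : carrier;
  ginv : carrier -> carrier;
  gmulA : forall x y z, gmul x (gmul y z) = gmul (gmul x y) z;
  gmul1l : forall x, gmul gone x = x;
  gmul1r : forall x, gmul x gone = x;
  gmulVl : forall x, gmul (ginv x) x = gone;
  gmulVr : forall x, gmul x (ginv x) = gone
}.
Arguments gmul {g} _ _.
Arguments gone {g}.
Arguments ginv {g} _.

Definition abelian (N : group) : Prop := forall x y : N, gmul x y = gmul y x.

Definition is_left_action {G : group} {X : Type} (act : G -> X -> X) : Prop :=
  (forall x, act (@gone G) x = x) /\
  (forall g g' x, act (gmul g g') x = act g (act g' x)).

Definition is_right_action {H : group} {X : Type} (act : X -> H -> X) : Prop :=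
  (forall x, act x (@gone H) = x) /\
  (forall x h h', act x (gmul h h') = act (act x h) h').

Definition left_transitive {G : group} {X : Type} (act : G -> X -> X) : Prop :=
  forall x y : X, exists g, act g x = y.

Definition right_transitive {H : group} {X : Type} (act : X -> H -> X) : Prop :=
  forall x y : X, exists h, act x h = y.

Definition left_skew_bracoid {G N : group} (odot : G -> N -> N) : Prop :=
  is_left_action odot /\ left_transitive odot /\
  forall (g : G) (mu eta : N),
    odot g (gmul mu eta) =
    gmul (gmul (odot g mu) (ginv (odot g (@gone N)))) (odot g eta).

Definition left_bracoid {G N : group} (odot : G -> N -> N) : Prop :=
  left_skew_bracoid odot /\ abelian N.

Definition alpha {G N : group} (odot : G -> N -> N) (g : G) (eta : N) : N :=
  gmul (gmul (ginv (odot g (@gone N))) (odot g eta)) (ginv eta).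

Definition beta {H N : group} (boxdot : N -> H -> N) (h : H) (eta : N) : N :=
  gmul (gmul (ginv eta) (boxdot eta h)) (ginv (boxdot (@gone N) h)).

(* Main.v *)
Require Import Defs.
From Stdlib Require Import List Bool Arith.
Import ListNotations.

Section AbSolver.
Variable N : group.
Hypothesis Hab : abelian N.

Lemma g_cancel_l (a b c : N) : gmul a b = gmul a c -> b = c.
Proof.
  intro H. rewrite <- (gmul1l N b), <- (gmul1l N c), <- (gmulVl N a), <- !gmulA, H. reflexivity.
Qed.

Lemma g_inv_unique (a b : N) : gmul a b = gone -> b = ginv a.
Proof.
  intro H. apply (g_cancel_l a). rewrite H, gmulVr. reflexivity.
Qed.

Lemma g_inv_mul (a b : N) : ginv (gmul a b) = gmul (ginv a) (ginv b).
Proof.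
  symmetry. apply g_inv_unique.
  rewrite (Hab (ginv a) (ginv b)).
  rewrite <- gmulA, (gmulA N b), gmulVr, gmul1l, gmulVr. reflexivity.
Qed.

Lemma g_inv_one : ginv (@gone N) = gone.
Proof. symmetry. apply g_inv_unique. apply gmul1l. Qed.

Lemma g_inv_inv (a : N) : ginv (ginv a) = a.
Proof. symmetry. apply g_inv_unique. apply gmulVl. Qed.

Inductive tm := At (n : nat) | Un | Mu (a b : tm) | Iv (a : tm).

Variable env : list N.

Fixpoint evalt (t : tm) : N :=
  match t with
  | At n => nth n env gone
  | Un => gone
  | Mu a b => gmul (evalt a) (evalt b)
  | Iv a => ginv (evalt a)
  end.

Definition sev (s : bool * nat) : N :=
  if fst s then ginv (nth (snd s) env gone) else nth (snd s) env gone.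

Fixpoint prodl (l : list (bool * nat)) : N :=
  match l with [] => gone | a :: l' => gmul (sev a) (prodl l') end.

Definition flip (s : bool * nat) := (negb (fst s), snd s).

Fixpoint fl (t : tm) : list (bool * nat) :=
  match t with
  | At n => [(false, n)]
  | Un => []
  | Mu a b => fl a ++ fl b
  | Iv a => map flip (fl a)
  end.

Lemma prodl_app l1 l2 : prodl (l1 ++ l2) = gmul (prodl l1) (prodl l2).
Proof.
  induction l1 as [|a l IH]; simpl. now rewrite gmul1l.
  now rewrite IH, gmulA.
Qed.

Lemma sev_flip s : sev (flip s) = ginv (sev s).
Proof. destruct s as [[|] n]; unfold sev, flip; simpl; now rewrite ?g_inv_inv. Qed.

Lemma prodl_flip l : prodl (map flip l) = ginv (prodl l).
Proof.
  induction l as [|a l IH]; simpl. now rewrite g_inv_one.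
  now rewrite IH, sev_flip, g_inv_mul.
Qed.

Lemma evalt_fl t : evalt t = prodl (fl t).
Proof.
  induction t; simpl.
  - unfold sev; simpl. now rewrite gmul1r.
  - reflexivity.
  - now rewrite prodl_app, IHt1, IHt2.
  - now rewrite prodl_flip, IHt.
Qed.

Definition seqb (a b : bool * nat) := Bool.eqb (fst a) (fst b) && Nat.eqb (snd a) (snd b).

Lemma seqb_eq a b : seqb a b = true -> a = b.
Proof.
  destruct a, b; unfold seqb; simpl. intro H. apply andb_prop in H as [H1 H2].
  apply Bool.eqb_prop in H1. apply Nat.eqb_eq in H2. now subst.
Qed.

Fixpoint memb (a : bool * nat) l := match l with [] => false | b :: l' => seqb a b || memb a l' end.
Fixpoint rem1 (a : bool * nat) l := match l with [] => [] | b :: l' => if seqb a b then l' else b :: rem1 a l' end.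

Lemma prodl_rem a l : memb a l = true -> prodl l = gmul (sev a) (prodl (rem1 a l)).
Proof.
  induction l as [|b l IH]; simpl. discriminate.
  destruct (seqb a b) eqn:E; simpl.
  - intros _. now rewrite (seqb_eq _ _ E).
  - intro H. rewrite (IH H). rewrite !gmulA. now rewrite (Hab (sev a) (sev b)).
Qed.

Definition ins a acc := if memb (flip a) acc then rem1 (flip a) acc else a :: acc.

Lemma prodl_ins a acc : prodl (ins a acc) = gmul (sev a) (prodl acc).
Proof.
  unfold ins. destruct (memb (flip a) acc) eqn:E.
  - rewrite (prodl_rem _ _ E). rewrite sev_flip, gmulA, gmulVr, gmul1l. reflexivity.
  - reflexivity.
Qed.

Fixpoint canc l := match l with [] => [] | a :: l' => ins a (canc l') end.

Lemma prodl_canc l : prodl (canc l) = prodl l.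
Proof. induction l; simpl. reflexivity. now rewrite prodl_ins, IHl. Qed.

Lemma solve_ok t1 t2 :
  (match canc (fl t1 ++ map flip (fl t2)) with [] => true | _ => false end) = true ->
  evalt t1 = evalt t2.
Proof.
  intro H. destruct (canc (fl t1 ++ map flip (fl t2))) eqn:E; [|discriminate].
  assert (P : prodl (canc (fl t1 ++ map flip (fl t2))) = gone) by now rewrite E.
  rewrite prodl_canc, prodl_app, prodl_flip, <- !evalt_fl in P.
  apply g_inv_unique in P. rewrite <- (g_inv_inv (evalt t2)), P.
  symmetry; apply g_inv_inv.
Qed.

End AbSolver.

Ltac lpos x l :=
  match l with
  | x :: _ => constr:(0)
  | _ :: ?l' => let n := lpos x l' in constr:(S n)
  end.

Ltac inlist x l :=
  match l with
  | x :: _ => constr:(true)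
  | _ :: ?l' => inlist x l'
  | _ => constr:(false)
  end.

Ltac collect e l :=
  match e with
  | gmul ?a ?b => let l1 := collect a l in collect b l1
  | ginv ?a => collect a l
  | gone => l
  | _ => let b := inlist e l in
         match b with true => l | false => constr:(e :: l) end
  end.

Ltac reif e l :=
  match e with
  | gmul ?a ?b => let ra := reif a l in let rb := reif b l in constr:(Mu ra rb)
  | ginv ?a => let ra := reif a l in constr:(Iv ra)
  | gone => constr:(Un)
  | _ => let n := lpos e l in constr:(At n)
  end.

Ltac gsolve Hab :=
  match goal with
  | |- @eq (carrier ?N) ?a ?b =>
      let l0 := constr:(@nil (carrier N)) in
      let l1 := collect a l0 in
      let l := collect b l1 in
      let ra := reif a l in
      let rb := reif b l in
      change (evalt N l ra = evalt N l rb);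
      apply (@solve_ok N Hab); vm_compute; reflexivity
  end.

Lemma step (N : group) (s t u v : N) : s = t -> gmul u t = gmul v s -> u = v.
Proof.
  intros H1 H2. rewrite H1 in H2.
  rewrite <- (gmul1r N u), <- (gmul1r N v), <- (gmulVr N t), !gmulA, H2. reflexivity.
Qed.

Arguments step {N s t u v}.

Theorem proposition3p5 (G N H : group) (odot : G -> N -> N) (boxdot : N -> H -> N)
  (hbr : left_bracoid odot)
  (hact : is_right_action boxdot) (htr : right_transitive boxdot)
  (hcomm : forall (g : G) (h : H) (eta : N),
      odot g (boxdot eta h) = boxdot (odot g eta) h)
  (hab : forall (g : G) (h : H) (eta : N),
      alpha odot g (beta boxdot h eta) = beta boxdot h (alpha odot g eta)) :
  forall (eta : N) (h : H),
    beta boxdot h (ginv eta) = ginv (beta boxdot h eta) /\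
    boxdot (ginv eta) h =
      gmul (gmul (boxdot (@gone N) h) (boxdot (@gone N) h)) (ginv (boxdot eta h)).
Proof.
  intros eta h. destruct hbr as [[_ [Htr B]] Hab].
  set (c := boxdot gone h).
  assert (key : forall g, gmul (boxdot (odot g gone) h) (boxdot (ginv (odot g gone)) h) = gmul c c).
  { intro g. set (x := odot g gone).
    pose proof (hcomm g h gone) as F1. fold c x in F1.
    pose proof (hcomm g h (ginv x)) as F3.
    pose proof (hab g h (ginv x)) as F2. unfold alpha, beta in F2. fold c x in F2.
    assert (Ha : gmul (gmul (ginv x) (odot g (ginv x))) (ginv (ginv x)) = odot g (ginv x))
      by gsolve Hab.
    rewrite Ha in F2.
    pose proof (B g c (ginv c)) as Egc. rewrite (gmulVr N c) in Egc. fold x in Egc.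
    pose proof (B g (ginv (ginv x)) (ginv x)) as Egx. rewrite (gmulVl N (ginv x)) in Egx. fold x in Egx.
    pose proof (B g (gmul (ginv (ginv x)) (boxdot (ginv x) h)) (ginv c)) as Egd.
    pose proof (B g (ginv (ginv x)) (boxdot (ginv x) h)) as Egd2.
    rewrite Egd2 in Egd. fold x in Egd.
    clear Ha Egd2.
    (apply (step F1) + apply (step (eq_sym F1)));
    (apply (step F2) + apply (step (eq_sym F2)));
    (apply (step F3) + apply (step (eq_sym F3)));
    (apply (step Egc) + apply (step (eq_sym Egc)));
    (apply (step Egx) + apply (step (eq_sym Egx)));
    (apply (step Egd) + apply (step (eq_sym Egd)));
    gsolve Hab. }
  destruct (Htr gone eta) as [g Hg].
  pose proof (key g) as K. rewrite Hg in K.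
  assert (G2 : boxdot (ginv eta) h = gmul (gmul c c) (ginv (boxdot eta h))).
  { apply (step K). gsolve Hab. }
  split; [|exact G2].
  unfold beta. fold c. rewrite G2. gsolve Hab.
Qed.
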